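(* Let $\mathrm{M}$ be a simple matroid on a finite set $E$, let $\mathcal{G}$ be a building set of its lattice of flats, and let $e\in E$. Then the set \[ \mathcal{G}\setminus e=\{S\in\mathcal{L}(\mathrm{M}\setminus e):\operatorname{cl}_{\mathrm{M}}(S)\in\mathcal{G}\} \] is a building set of the lattice of flats $\mathcal{L}(\mathrm{M}\setminus e)$ of the deletion $\mathrm{M}\setminus e$.
   Context: Flats are ordered by inclusion, $\hat0=\varnothing$, join $F\vee G=\operatorname{cl}(F\cup G)$. A building set of a geometric lattice $\mathcal{L}$ is $\mathcal{G}\subseteq\mathcal{L}\setminus\{\hat0\}$ such that for every $F\neq\hat0$, with $\max\mathcal{G}_{\leqslant F}$ the set of maximal elements of $\{G\in\mathcal{G}:G\leqslant F\}$, the join map $\prod_{G\in\max\mathcal{G}_{\leqslant F}}[\hat0,G]\to[\hat0,F]$ is a poset isomorphism. *)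

(* Defs.v *)
From mathcomp Require Import all_boot.
Set Implicit Arguments. Unset Strict Implicit. Unset Printing Implicit Defensive.

(* A matroid on a finite ground set E (a subset of a finType T), given by its
   rank function r (only values on subsets of E matter). *)
Definition is_matroid (T : finType) (E : {set T}) (r : {set T} -> nat) : Prop :=
  [/\ forall X : {set T}, X \subset E -> r X <= #|X|,
      forall X Y : {set T}, X \subset Y -> Y \subset E -> r X <= r Y &
      forall X Y : {set T}, X \subset E -> Y \subset E ->
        r (X :|: Y) + r (X :&: Y) <= r X + r Y].

Definition simple_matroid (T : finType) (E : {set T}) (r : {set T} -> nat) : Prop :=
  forall x y, x \in E -> y \in E -> r [set x; y] = #|[set x; y]|.

Definition cl (T : finType) (E : {set T}) (r : {set T} -> nat) (X : {set T}) : {set T} :=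
  [set x in E | r (x |: X) == r X].

Definition is_flat (T : finType) (E : {set T}) (r : {set T} -> nat) (F : {set T}) : bool :=
  (F \subset E) && (cl E r F == F).

Definition bot (T : finType) (E : {set T}) (r : {set T} -> nat) : {set T} := cl E r set0.

Definition maxG (T : finType) (G : {set {set T}}) (F : {set T}) : {set {set T}} :=
  [set H in G | (H \subset F) &&
     [forall K in G, (K \subset F) ==> (H \subset K) ==> (K == H)]].

Definition join_fam (T : finType) (E : {set T}) (r : {set T} -> nat)
    (I : {set {set T}}) (x : {set T} -> {set T}) : {set T} :=
  cl E r (\bigcup_(H in I) x H).

(* x is an element of the product of intervals [bot, H], H in I *)
Definition in_prod (T : finType) (E : {set T}) (r : {set T} -> nat)
    (I : {set {set T}}) (x : {set T} -> {set T}) : Prop :=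
  forall H : {set T}, H \in I -> is_flat E r (x H) /\ x H \subset H.

Definition building_set (T : finType) (E : {set T}) (r : {set T} -> nat)
    (G : {set {set T}}) : Prop :=
  (forall H : {set T}, H \in G -> is_flat E r H /\ H != bot E r) /\
  forall F, is_flat E r F -> F != bot E r ->
    let I := maxG G F in
    (forall x, in_prod E r I x -> join_fam E r I x \subset F) /\
    (forall x y, in_prod E r I x -> in_prod E r I y ->
        ((forall H : {set T}, H \in I -> x H \subset y H) <->
         join_fam E r I x \subset join_fam E r I y)) /\
    (forall K : {set T}, is_flat E r K -> K \subset F ->
        exists x, in_prod E r I x /\ join_fam E r I x = K).

(* G \ e := { S flat of M\e : cl_M(S) in G } ; M\e = (E :\ e, r) *)
Definition del_building (T : finType) (E : {set T}) (r : {set T} -> nat)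
    (G : {set {set T}}) (e : T) : {set {set T}} :=
  [set S | is_flat (E :\ e) r S & cl E r S \in G].

(* Main.v *)
Require Import Defs.
From mathcomp Require Import all_boot zify.
Set Implicit Arguments. Unset Strict Implicit. Unset Printing Implicit Defensive.

Lemma r0 T (E : {set T}) r : is_matroid E r -> r set0 = 0.
Proof. by case=> h _ _; move: (h set0 (sub0set E)); rewrite cards0 leqn0 => /eqP. Qed.

Lemma clE T (E : {set T}) r (X : {set T}) : cl E r X \subset E.
Proof. by apply/subsetP => x; rewrite inE => /andP[]. Qed.

Lemma sub_cl T (E : {set T}) r (X : {set T}) : X \subset E -> X \subset cl E r X.
Proof.
move=> hX; apply/subsetP => x hx; rewrite inE (subsetP hX) //=.
by rewrite (setUidPr _) // sub1set.
Qed.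

Lemma cl_mono T (E : {set T}) r (A B : {set T}) : is_matroid E r -> B \subset E ->
  A \subset B -> cl E r A \subset cl E r B.
Proof.
case=> _ hmono hsub hBE hAB; apply/subsetP => x; rewrite !inE => /andP[xE /eqP hx].
rewrite xE /=.
have hAE : A \subset E by apply: subset_trans hAB hBE.
have hxA : x |: A \subset E by rewrite subUset sub1set xE.
have := hsub _ _ hxA hBE.
have -> : (x |: A) :|: B = x |: B by rewrite -setUA (setUidPr hAB).
have h1 : r A <= r ((x |: A) :&: B).
  apply: hmono; first by rewrite subsetI subsetUr.
  by apply: subset_trans (subsetIr _ _) hBE.
have h2 : r B <= r (x |: B) by apply: hmono; rewrite ?subsetUr // subUset sub1set xE.
move=> h3; apply/eqP; lia.
Qed.

Lemma cl_rank T (E : {set T}) r (X : {set T}) : is_matroid E r -> X \subset E ->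
  r (cl E r X) = r X.
Proof.
move=> hM hXE.
suff H : forall n (A : {set T}), #|A| = n -> A \subset cl E r X -> r (X :|: A) = r X.
  rewrite -{1}(setUidPr (sub_cl r hXE)); exact: H.
elim=> [|n IH] A hA hAc.
  by move/eqP: hA; rewrite cards_eq0 => /eqP ->; rewrite setU0.
case: (set_0Vmem A) => [hA0|[a ha]]; first by rewrite hA0 cards0 in hA.
have hA' : #|A :\ a| = n by move: hA; rewrite (cardsD1 a) ha; case.
have hA'c : A :\ a \subset cl E r X by apply: subset_trans (subsetDl _ _) hAc.
have := IH _ hA' hA'c.
have hac : a \in cl E r (X :|: A :\ a).
  apply: (subsetP (cl_mono hM _ (subsetUl _ _))) (subsetP hAc _ ha).
  by rewrite subUset hXE (subset_trans hA'c (clE _ _ _)).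
move: hac; rewrite inE => /andP[_ /eqP].
by rewrite setUCA setD1K // => -> .
Qed.

Lemma cl_idem T (E : {set T}) r (X : {set T}) : is_matroid E r -> X \subset E ->
  cl E r (cl E r X) = cl E r X.
Proof.
move=> hM hXE; apply/eqP; rewrite eqEsubset sub_cl ?clE // andbT.
apply/subsetP => y; rewrite inE => /andP[yE /eqP hy].
rewrite inE yE /=; rewrite (cl_rank hM hXE) in hy.
case: hM => _ hmono _.
have h1 : r X <= r (y |: X) by apply: hmono; rewrite ?subsetUr // subUset sub1set yE.
have h2 : r (y |: X) <= r (y |: cl E r X).
  apply: hmono; first by apply: setUS; exact: sub_cl hXE.
  by rewrite subUset sub1set yE clE.
apply/eqP; lia.
Qed.

Lemma flat_cl T (E : {set T}) r (X : {set T}) : is_matroid E r -> X \subset E ->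
  is_flat E r (cl E r X).
Proof. by move=> hM hX; rewrite /is_flat clE (cl_idem hM hX) eqxx. Qed.

Lemma cl_del T (E : {set T}) r e (X : {set T}) : cl (E :\ e) r X = cl E r X :\ e.
Proof. by apply/setP => x; rewrite !inE; case: (x == e); case: (x \in E). Qed.

Lemma cl_set1 T (E : {set T}) r f : simple_matroid E r -> f \in E -> cl E r [set f] = [set f].
Proof.
move=> hs fE; apply/setP => y; rewrite !inE.
case: (boolP (y \in E)) => yE /=; last by apply/esym/negbTE; apply: contraNneq yE => ->.
have := hs y f yE fE; have := hs f f fE fE; rewrite setUid => -> ->.
rewrite cards2 cards1.
by case: (y == f).
Qed.

Lemma cl0 T (E : {set T}) r : is_matroid E r -> simple_matroid E r -> cl E r set0 = set0.
Proof.
move=> hM hs; apply/setP => y; rewrite !inE setU0 (r0 hM).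
case: (boolP (y \in E)) => yE //=.
by have := hs y y yE yE; rewrite setUid cards1 => ->.
Qed.

Lemma unionA T (E : {set T}) r (I : {set {set T}}) (F : {set T}) (x : {set T} -> {set T}) :
  is_matroid E r -> simple_matroid E r ->
  (forall x, in_prod E r I x -> join_fam E r I x \subset F) ->
  (forall x y, in_prod E r I x -> in_prod E r I y ->
     ((forall H, H \in I -> x H \subset y H) <-> join_fam E r I x \subset join_fam E r I y)) ->
  (forall K, is_flat E r K -> K \subset F -> exists x, in_prod E r I x /\ join_fam E r I x = K) ->
  in_prod E r I x -> \bigcup_(H in I) x H = join_fam E r I x.
Proof.
move=> hM hs h1 h2 h3 hx.
have hU : forall z, in_prod E r I z -> \bigcup_(H in I) z H \subset E.
  move=> z hz; apply/bigcupsP => H hH; by case: (hz H hH) => /andP[].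
apply/eqP; rewrite eqEsubset sub_cl ?(hU x hx) //=.
apply/subsetP => f hf.
have fE : f \in E := subsetP (clE _ _ _) f hf.
have [z [hz hzj]] : exists z, in_prod E r I z /\ join_fam E r I z = [set f].
  apply: h3; first by rewrite /is_flat sub1set fE cl_set1 ?eqxx.
  by rewrite sub1set; apply: (subsetP (h1 x hx)).
have hzx : forall H, H \in I -> z H \subset x H.
  by apply/(h2 z x hz hx); rewrite hzj sub1set.
have : f \in \bigcup_(H in I) z H.
  apply/negPn/negP => hn.
  have h0 : \bigcup_(H in I) z H = set0.
    apply/eqP; rewrite -subset0; apply/subsetP => g hg.
    have : g \in join_fam E r I z by apply: (subsetP (sub_cl r (hU z hz))).
    by rewrite hzj inE => /eqP eg; subst g; rewrite hg in hn.
  move: hzj; rewrite /join_fam h0 cl0 // => /setP /(_ f).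
  by rewrite !inE eqxx.
move/bigcupP => [H hH fz]; apply/bigcupP; exists H => //.
exact: (subsetP (hzx H hH) f fz).
Qed.

Lemma lemB T (E : {set T}) r (I : {set {set T}}) (F : {set T}) (x : {set T} -> {set T}) (e : T) (H0 : {set T}) :
  is_matroid E r -> simple_matroid E r ->
  (forall x, in_prod E r I x -> join_fam E r I x \subset F) ->
  (forall x y, in_prod E r I x -> in_prod E r I y ->
     ((forall H, H \in I -> x H \subset y H) <-> join_fam E r I x \subset join_fam E r I y)) ->
  (forall K, is_flat E r K -> K \subset F -> exists x, in_prod E r I x /\ join_fam E r I x = K) ->
  in_prod E r I x -> H0 \in I -> e \in x H0 ->
  e \in cl E r (join_fam E r I x :\ e) -> e \in cl E r (x H0 :\ e).
Proof.
move=> hM hs h1 h2 h3 hx hH0 exH0 ecl.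
case: (boolP (e \in cl E r (x H0 :\ e))) => // hn; exfalso.
have [fx0 sx0] := hx H0 hH0.
have x0E : x H0 \subset E by case/andP: fx0.
have x0cl : cl E r (x H0) = x H0 by case/andP: fx0 => _ /eqP.
pose x' := fun H => if H == H0 then x H0 :\ e else x H.
have hx' : in_prod E r I x'.
  move=> H hH; rewrite /x'; case: eqP => [->|_]; last exact: hx.
  split; last by apply: subset_trans (subsetDl _ _) sx0.
  rewrite /is_flat (subset_trans (subsetDl _ _) x0E) /= eqEsubset.
  rewrite sub_cl ?(subset_trans (subsetDl _ _) x0E) // andbT.
  apply/subsetP => g hg; rewrite !inE.
  have : g \in x H0.
    by rewrite -x0cl; apply: (subsetP (cl_mono hM x0E (subsetDl _ _))) hg.
  by move=> ->; rewrite andbT; apply/eqP => ge; subst g; rewrite hg in hn.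
have hU' : \bigcup_(H in I) x' H \subset E.
  apply/bigcupsP => H hH; by case: (hx' H hH) => /andP[].
have hj' : join_fam E r I x :\ e \subset join_fam E r I x'.
  rewrite -(unionA hM hs h1 h2 h3 hx).
  apply/subsetP => g /setD1P [ge /bigcupP [H hH gH]].
  apply: (subsetP (sub_cl r hU')); apply/bigcupP; exists H => //.
  rewrite /x'; case: eqP => [eH|//]; subst H; by rewrite !inE ge.
have hj : join_fam E r I x \subset join_fam E r I x'.
  apply/subsetP => g hg; case: (boolP (g == e)) => [/eqP ->|ge].
    have := cl_mono hM (clE E r _) hj'.
    rewrite /join_fam (cl_idem hM hU') => /subsetP; apply; exact: ecl.
  by apply: (subsetP hj'); apply/setD1P.
have := (proj2 (h2 x x' hx hx') hj) H0 hH0.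
rewrite /x' eqxx => /subsetP /(_ e exH0).
by rewrite !inE eqxx.
Qed.

Lemma idF T (E : {set T}) r (I : {set {set T}}) (F : {set T}) :
  is_matroid E r -> is_flat E r F ->
  (forall H, H \in I -> is_flat E r H) ->
  (forall x, in_prod E r I x -> join_fam E r I x \subset F) ->
  (forall x y, in_prod E r I x -> in_prod E r I y ->
     ((forall H, H \in I -> x H \subset y H) <-> join_fam E r I x \subset join_fam E r I y)) ->
  (forall K, is_flat E r K -> K \subset F -> exists x, in_prod E r I x /\ join_fam E r I x = K) ->
  join_fam E r I (fun H => H) = F.
Proof.
move=> hM hF hI h1 h2 h3.
have hid : in_prod E r I (fun H => H) by move=> H hH; split=> //; exact: hI.
apply/eqP; rewrite eqEsubset h1 //=.
have [z [hz <-]] := h3 F hF (subxx F).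
apply/(h2 z _ hz hid) => H hH; exact: (hz H hH).2.
Qed.

Lemma cl_between T (E : {set T}) r (A B : {set T}) : is_matroid E r ->
  A \subset E -> A \subset B -> B \subset cl E r A -> cl E r B = cl E r A.
Proof.
move=> hM hAE hAB hBc; apply/eqP; rewrite eqEsubset.
have hBE : B \subset E := subset_trans hBc (clE _ _ _).
rewrite (cl_mono hM hBE hAB) andbT.
by rewrite -(cl_idem hM hAE); apply: cl_mono => //; exact: clE.
Qed.

Lemma maxex T (G : {set {set T}}) (F A : {set T}) :
  A \in G -> A \subset F -> exists2 H, H \in maxG G F & A \subset H.
Proof.
move=> hA hAF.
have P0 : (A \in G) && (A \subset A) && (A \subset F) by rewrite hA subxx hAF.
case: (@arg_maxnP _ A (fun B : {set T} => (B \in G) && (A \subset B) && (B \subset F)) (fun B : {set T} => #|B|) P0) => H /andP[/andP[hHG hAH] hHF] hmax.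
exists H => //; rewrite inE hHG hHF /=.
apply/forallP => K; apply/implyP => hK; apply/implyP => hKF; apply/implyP => hHK.
have := hmax K; rewrite hK (subset_trans hAH hHK) hKF => /(_ isT) hc.
by rewrite eq_sym eqEcard hHK; apply: hc.
Qed.

Theorem lemma2p24 (T : finType) (E : {set T}) (r : {set T} -> nat)
    (G : {set {set T}}) (e : T) :
  is_matroid E r -> simple_matroid E r -> e \in E ->
  building_set E r G ->
  building_set (E :\ e) r (del_building E r G e).
Proof.
move=> hM hs eE [hG1 hG2].
have bot0 : bot E r = set0 := cl0 hM hs.
have bot0' : bot (E :\ e) r = set0 by rewrite /bot cl_del (cl0 hM hs) set0D.
have flatdel : forall S, is_flat (E :\ e) r S -> S \subset E :\ e /\ cl E r S :\ e = S.
  by move=> S /andP[h1 /eqP]; rewrite cl_del.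
split.
  move=> H; rewrite inE => /andP[hf hc]; split=> //; rewrite bot0'.
  apply/eqP => H0; move: (hG1 _ hc).2; by rewrite H0 (cl0 hM hs) bot0 eqxx.
move=> S hS; rewrite bot0' => hS0 J.
have [SE Scl] := flatdel S hS.
have SE' : S \subset E := subset_trans SE (subsetDl _ _).
pose F := cl E r S.
have hF : is_flat E r F := flat_cl hM SE'.
have hSF : S \subset F := sub_cl r SE'.
have hF0 : F != bot E r.
  rewrite bot0; case/set0Pn: hS0 => s hs0; apply/set0Pn; exists s.
  exact: (subsetP hSF).
case: (hG2 F hF hF0) => h1 [h2 h3].
set I := maxG G F.
have hIG : forall H, H \in I -> H \in G by move=> H; rewrite inE => /andP[].
have hIflat : forall H, H \in I -> is_flat E r H by move=> H /hIG /hG1 [].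
have hIsub : forall H, H \in I -> H \subset F.
  by move=> H; rewrite inE => /andP[_ /andP[]].
have hIE : forall H, H \in I -> H \subset E by move=> H /hIflat /andP[].
have hidF := idF hM hF hIflat h1 h2 h3.
have hid : in_prod E r I (fun H => H) by move=> H hH; split=> //; exact: hIflat.
have hC : forall H, H \in I -> cl E r (H :\ e) = H.
  move=> H hH; have /andP[HE /eqP Hcl] := hIflat H hH.
  case: (boolP (e \in H)) => eH; last first.
    have -> : H :\ e = H.
      by apply/setP=> g; rewrite !inE; case: eqP => // ->; rewrite (negbTE eH).
    exact: Hcl.
  have ecl : e \in cl E r (H :\ e).
    apply: (lemB hM hs h1 h2 h3 hid hH eH).
    rewrite hidF -/F Scl; exact: (subsetP (hIsub H hH)).
  apply/eqP; rewrite eqEsubset.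
  rewrite -{2}Hcl (cl_mono hM HE (subsetDl _ _)) /=.
  apply/subsetP => g gH; case: (boolP (g == e)) => [/eqP -> //|ge].
  apply: (subsetP (sub_cl r (subset_trans (subsetDl _ _) HE))).
  by rewrite !inE ge.
have hDG : forall H, H \in I -> H :\ e \in del_building E r G e.
  move=> H hH; rewrite inE /is_flat cl_del hC // eqxx hIG // andbT /=.
  by rewrite andbT; apply: setSD; apply: hIE.
have hDS : forall H, H \in I -> H :\ e \subset S.
  by move=> H hH; rewrite -Scl; apply: setSD; apply: hIsub.
have hJ : J = [set H :\ e | H in I].
  apply/setP => L; apply/idP/idP.
    rewrite inE => /andP[hL /andP[hLS /forallP hmax]].
    move: (hL); rewrite inE => /andP[hLf hLG].
    have [LE Lcl] := flatdel L hLf.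
    have hLF : cl E r L \subset F by apply: cl_mono.
    have [H hH hLH] := maxex hLG hLF.
    have LH : L \subset H :\ e.
      apply/subsetP => g gL; rewrite !inE.
      have := subsetP LE g gL; rewrite !inE => /andP[-> _] /=.
      exact: (subsetP hLH) (subsetP (sub_cl r (subset_trans LE (subsetDl _ _))) g gL).
    have := hmax (H :\ e); rewrite hDG // hDS // LH /= => /eqP <-.
    by apply: imset_f.
  case/imsetP => H hH ->; rewrite inE hDG // hDS //=.
  apply/forallP => K; apply/implyP => hK; apply/implyP => hKS; apply/implyP => hHK.
  move: (hK); rewrite inE => /andP[hKf hKG].
  have [KE Kcl] := flatdel K hKf.
  have hKF : cl E r K \subset F by apply: cl_mono.
  have hHcK : H \subset cl E r K.
    rewrite -{1}(hC H hH); apply: cl_mono => //.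
    exact: subset_trans KE (subsetDl _ _).
  move: hH; rewrite inE => /andP[_ /andP[_ /forallP hmax]].
  have := hmax (cl E r K); rewrite hKG hKF hHcK /= => /eqP eK.
  by rewrite -Kcl eK.
pose U (y : {set T} -> {set T}) := \bigcup_(H in I) y (H :\ e).
have hjoinJ : forall y, join_fam (E :\ e) r J y = cl E r (U y) :\ e.
  move=> y; rewrite /join_fam hJ big_imset_idem ?cl_del //; exact: setUid.
have hyI : forall y, in_prod (E :\ e) r J y -> forall H, H \in I ->
    y (H :\ e) \subset E :\ e /\ cl E r (y (H :\ e)) :\ e = y (H :\ e)
    /\ y (H :\ e) \subset H :\ e.
  move=> y hy H hH; have /hy [hf hs'] : H :\ e \in J by rewrite hJ; apply/imsetP; exists H.
  by have [a b] := flatdel _ hf; split; [|split].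
have hUE : forall y, in_prod (E :\ e) r J y -> U y \subset E :\ e.
  move=> y hy; apply/bigcupsP => H hH; by have [? _] := hyI y hy H hH.
have hUE' : forall y, in_prod (E :\ e) r J y -> U y \subset E.
  by move=> y hy; apply: subset_trans (hUE y hy) (subsetDl _ _).
pose xx (y : {set T} -> {set T}) := fun H => cl E r (y (H :\ e)).
have hxx : forall y, in_prod (E :\ e) r J y -> in_prod E r I (xx y).
  move=> y hy H hH; have [yE [_ yH]] := hyI y hy H hH.
  have yE' := subset_trans yE (subsetDl _ _).
  split; first exact: flat_cl.
  rewrite /xx -{2}(hC H hH); apply: cl_mono => //.
  exact: subset_trans (subsetDl _ _) (hIE H hH).
have hjoinI : forall y, in_prod (E :\ e) r J y -> join_fam E r I (xx y) = cl E r (U y).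
  move=> y hy; rewrite /join_fam; apply: cl_between => //; first exact: hUE'.
    rewrite /U; apply/bigcupsP => H hH; apply: subset_trans (bigcup_sup H hH).
    by apply: sub_cl; have [yE _] := hyI y hy H hH; apply: subset_trans yE (subsetDl _ _).
  apply/bigcupsP => H hH; rewrite /xx; apply: (cl_mono hM (hUE' y hy)).
  exact: (bigcup_sup H hH).
split.
  move=> y hy; rewrite hjoinJ -hjoinI // -Scl; apply: setSD.
  exact: h1 (hxx y hy).
split.
  move=> y y' hy hy'; split.
    move=> hyy; rewrite !hjoinJ; apply: setSD; apply: (cl_mono hM (hUE' y' hy')).
    apply/bigcupsP => H hH; apply: subset_trans (bigcup_sup H hH).
    by apply: hyy; rewrite hJ; apply/imsetP; exists H.
  rewrite !hjoinJ => hsub.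
  have hU : U y \subset cl E r (U y').
    apply/subsetP => g gU.
    have : g \in cl E r (U y) :\ e.
      apply/setD1P; split; first by case/setD1P: (subsetP (hUE y hy) g gU).
      exact: (subsetP (sub_cl r (hUE' y hy))).
    by move/(subsetP hsub); case/setD1P.
  have hcl : cl E r (U y) \subset cl E r (U y').
    rewrite -(cl_idem hM (hUE' y' hy')); apply: cl_mono => //; exact: clE.
  rewrite -!hjoinI // in hcl.
  have := proj2 (h2 _ _ (hxx y hy) (hxx y' hy')) hcl => hx.
  move=> L; rewrite hJ => /imsetP [H hH ->].
  have [_ [c1 _]] := hyI y hy H hH; have [_ [c2 _]] := hyI y' hy' H hH.
  by rewrite -c1 -c2; apply: setSD; apply: hx.
move=> K hK hKS.
have [KE Kcl] := flatdel K hK.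
have KE' : K \subset E := subset_trans KE (subsetDl _ _).
have hK' : is_flat E r (cl E r K) := flat_cl hM KE'.
have hK'F : cl E r K \subset F by apply: cl_mono.
have [x [hx hxj]] := h3 _ hK' hK'F.
exists (fun L => x (cl E r L) :\ e); split.
  move=> L; rewrite hJ => /imsetP [H hH ->]; rewrite hC //.
  have [/andP[xE /eqP xcl] xH] := hx H hH.
  split; last exact: setSD.
  rewrite /is_flat cl_del (setSD _ xE) /= eqEsubset; apply/andP; split.
    by apply: setSD; rewrite -{2}xcl; apply: cl_mono => //; exact: subsetDl.
  apply/subsetP => g; case/setD1P => ge gx; apply/setD1P; split=> //.
  apply: (subsetP (sub_cl r (subset_trans (subsetDl _ _) xE))).
  by apply/setD1P.
rewrite hjoinJ.
have -> : U (fun L => x (cl E r L) :\ e) = K.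
  rewrite -Kcl -hxj -(unionA hM hs h1 h2 h3 hx).
  apply/setP => g; apply/bigcupP/setD1P.
    by case=> H hH; rewrite hC // => /setD1P [ge gx]; split=> //; apply/bigcupP; exists H.
  by case=> ge /bigcupP [H hH gx]; exists H => //; rewrite hC //; apply/setD1P.
exact: Kcl.
Qed.
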